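(* Let $p$ be a prime, $k=\mathbb{F}_p$, and $V$ (the additive group of) a $k$-vector space of infinite dimension. Define $\widehat{V}^{[1]}=\widehat V$ and $\widehat V^{[i+1]}=\widehat{\widehat V^{[i]}}$, with profinite projections $\widehat\pi^{[1]}:V\to\widehat V^{[1]}$ and $\widehat\pi^{[i+1]}:\widehat V^{[i]}\to\widehat V^{[i+1]}$. Then for every $i\geq 1$, $\widehat\pi^{[i]}$ is an injective but non-surjective group homomorphism.
   Context: A finite approximation of a group $G$ is a pair $\mathbf{v}=(F_{\mathbf{v}},\varphi_{\mathbf{v}})$ with $F_{\mathbf{v}}$ a finite group and $\varphi_{\mathbf{v}}:G\to F_{\mathbf{v}}$ a group homomorphism; a morphism $f:\mathbf{v}\to\mathbf{v}'$ is a group homomorphism $f:F_{\mathbf{v}}\to F_{\mathbf{v}'}$ with $f\circ\varphi_{\mathbf{v}}=\varphi_{\mathbf{v}'}$. The profinite completion of $G$ is $\widehat{G}=\{(g_{\mathbf{v}})_{\mathbf{v}}\in\prod_{\mathbf{v}}F_{\mathbf{v}} : \psi(g_{\mathbf{v}})=g_{\mathbf{w}} \text{ for every morphism } \psi:\mathbf{v}\to\mathbf{w}\}$, the product over all finite approximations of $G$ (set-theoretic size issues ignored), with componentwise group law; the profinite projection is $\widehat{\pi}:G\to\widehat G$, $g\mapsto(\varphi_{\mathbf{v}}(g))_{\mathbf{v}}$. All completions here are of abstract groups (no topology). *)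

(* Defs.v *)
From mathcomp Require Import all_boot all_algebra.
From Stdlib Require Import FunctionalExtensionality ProofIrrelevance.
Import GRing.Theory.

Set Implicit Arguments.
Unset Strict Implicit.
Unset Printing Implicit Defensive.

Record GrpStr (T : Type) := GrpStr_ {
  gmul : T -> T -> T;
  gone : T;
  ginv : T -> T;
  gmulA : forall x y z, gmul x (gmul y z) = gmul (gmul x y) z;
  gmul1l : forall x, gmul gone x = x;
  gmul1r : forall x, gmul x gone = x;
  gmulVl : forall x, gmul (ginv x) x = gone;
  gmulVr : forall x, gmul x (ginv x) = gone }.

Record Group := Group_ { carrier :> Type; gstr : GrpStr carrier }.

Definition is_hom (A B : Type) (sA : GrpStr A) (sB : GrpStr B) (f : A -> B) :=
  forall x y, f (gmul sA x y) = gmul sB (f x) (f y).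

Lemma hom1 (A B : Type) (sA : GrpStr A) (sB : GrpStr B) (f : A -> B) :
  is_hom sA sB f -> f (gone sA) = gone sB.
Proof.
move=> hf; have e : f (gone sA) = gmul sB (f (gone sA)) (f (gone sA)).
  by rewrite -hf gmul1l.
rewrite -[LHS](gmul1l sB) -(gmulVl sB (f (gone sA))) -gmulA -e.
by rewrite gmulVl.
Qed.

Lemma homV (A B : Type) (sA : GrpStr A) (sB : GrpStr B) (f : A -> B) x :
  is_hom sA sB f -> f (ginv sA x) = ginv sB (f x).
Proof.
move=> hf; have e : gmul sB (f (ginv sA x)) (f x) = gone sB.
  by rewrite -hf gmulVl (hom1 hf).
rewrite -[LHS](gmul1r sB) -(gmulVr sB (f x)) gmulA e gmul1l //.
Qed.

(* A finite approximation of G: a finite group, represented (up to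
   isomorphism) with carrier 'I_n, together with a homomorphism G -> F. *)
Record FinApprox (G : Group) := FinApprox_ {
  fa_n : nat;
  fa_str : GrpStr 'I_fa_n;
  fa_phi : G -> 'I_fa_n;
  fa_hom : is_hom (gstr G) fa_str fa_phi }.

Definition compatible (G : Group) (x : forall v : FinApprox G, 'I_(fa_n v)) : Prop :=
  forall (v w : FinApprox G) (f : 'I_(fa_n v) -> 'I_(fa_n w)),
    is_hom (fa_str v) (fa_str w) f ->
    (forall g, f (fa_phi v g) = fa_phi w g) ->
    f (x v) = x w.

Definition hat_car (G : Group) := {x : forall v : FinApprox G, 'I_(fa_n v) | compatible x}.

Lemma hat_eq (G : Group) (x y : hat_car G) :
  (forall v, proj1_sig x v = proj1_sig y v) -> x = y.
Proof.
case: x => x hx; case: y => y hy /= e.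
have exy : x = y by apply: functional_extensionality_dep.
subst y; f_equal; apply: proof_irrelevance.
Qed.

Section Hat.
Variable G : Group.

Definition hat_mul (x y : hat_car G) : hat_car G.
Proof.
exists (fun v => gmul (fa_str v) (proj1_sig x v) (proj1_sig y v)).
move=> v w f hf hc; rewrite hf (proj2_sig x v w f hf hc) (proj2_sig y v w f hf hc) //.
Defined.

Definition hat_one : hat_car G.
Proof.
exists (fun v => gone (fa_str v)).
move=> v w f hf _; exact: hom1 hf.
Defined.

Definition hat_inv (x : hat_car G) : hat_car G.
Proof.
exists (fun v => ginv (fa_str v) (proj1_sig x v)).
move=> v w f hf hc; rewrite (homV _ hf) (proj2_sig x v w f hf hc) //.
Defined.

Definition hat_str : GrpStr (hat_car G).
Proof.
apply: (@GrpStr_ _ hat_mul hat_one hat_inv).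
- by move=> x y z; apply: hat_eq => v /=; rewrite gmulA.
- by move=> x; apply: hat_eq => v /=; rewrite gmul1l.
- by move=> x; apply: hat_eq => v /=; rewrite gmul1r.
- by move=> x; apply: hat_eq => v /=; rewrite gmulVl.
- by move=> x; apply: hat_eq => v /=; rewrite gmulVr.
Defined.

Definition hat : Group := Group_ hat_str.

Definition hatPi (g : G) : hat :=
  exist (fun x => compatible x) (fun v => fa_phi v g) (fun v w f _ hc => hc g).

End Hat.

Fixpoint hatIter (G : Group) (i : nat) : Group :=
  match i with
  | 0 => G
  | i'.+1 => hat (hatIter G i')
  end.

Definition addGrpStr (V : zmodType) : GrpStr V :=
  @GrpStr_ V +%R 0%R (fun x => - x)%R (@addrA V) (@add0r V) (@addr0 V) (@addNr V) (@subrr V).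

Definition addGroup (V : zmodType) : Group := Group_ (addGrpStr V).

Definition infinite_dim (K : nzRingType) (V : lmodType K) : Prop :=
  ~ exists (n : nat) (e : 'I_n -> V),
      forall x : V, exists c : 'I_n -> K, x = (\sum_(i < n) c i *: e i)%R.

(* Main.v *)
Require Import Defs.
From mathcomp Require Import all_boot all_algebra.
From mathcomp Require Import boolp classical_sets functions filter.
From Stdlib Require Import ClassicalEpsilon.
Import GRing.Theory.
Set Implicit Arguments. Unset Strict Implicit. Unset Printing Implicit Defensive.
Local Open Scope ring_scope.
Local Open Scope classical_set_scope.

Definition ulim (U : set_system nat) (T : Type) (s : nat -> T) : T :=
  epsilon (inhabits (s 0%N)) (fun c => U [set k | s k = c]).

Lemma ulim_ex (U : set_system nat) (UF : UltraFilter U) (T : finType) (s : nat -> T) :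
  exists c, U [set k | s k = c].
Proof.
apply: contrapT => hn.
have hc : forall c, U (~` [set k | s k = c]).
  move=> c; case: (in_ultra_setVsetC [set k | s k = c] UF) => // h.
  by case: hn; exists c.
have : forall l : seq T, U [set k | forall c, c \in l -> s k <> c].
  elim=> [|c l IH].
    by apply: filterS (filterT) => k _ c; rewrite in_nil.
  apply: filterS (filterI (hc c) IH) => k [h1 h2] c'; rewrite in_cons.
  by case/orP=> [/eqP->|]; [apply: h1|apply: h2].
move=> /(_ (enum T)) /filter_ex [k hk].
apply: (hk (s k)) => //; exact: (@mem_enum T predT (s k)).
Qed.

Lemma ulimP (U : set_system nat) (UF : UltraFilter U) (T : finType) (s : nat -> T) :
  U [set k | s k = ulim U s].
Proof. exact: (epsilon_spec _ _ (ulim_ex UF s)). Qed.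

Lemma ulim_uniq (U : set_system nat) (UF : UltraFilter U) (T : finType) (s : nat -> T) c :
  U [set k | s k = c] -> ulim U s = c.
Proof.
move=> h; have PU : ProperFilter U := ultra_proper.
have [k [h1 h2]] := filter_ex (filterI (ulimP UF s) h).
by rewrite -h1 -h2.
Qed.

Lemma ulim_map (U : set_system nat) (UF : UltraFilter U) (T T' : finType) (s : nat -> T) (f : T -> T') :
  ulim U (fun k => f (s k)) = f (ulim U s).
Proof.
have PU : ProperFilter U := ultra_proper.
apply: ulim_uniq; apply: filterS (ulimP UF s) => k /= ->. by [].
Qed.

Lemma ulim_ext (U : set_system nat) (UF : UltraFilter U) (T : finType) (s s' : nat -> T) :
  (forall k, s k = s' k) -> ulim U s = ulim U s'.
Proof.
have PU : ProperFilter U := ultra_proper.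
move=> e; symmetry; apply: ulim_uniq; apply: filterS (ulimP UF s) => k /=.
by rewrite e.
Qed.

Lemma ulim_ev (U : set_system nat) (UF : UltraFilter U) (hU : eventually `<=` U)
  (T : finType) (s : nat -> T) c N :
  (forall k, (N <= k)%N -> s k = c) -> ulim U s = c.
Proof.
move=> h; apply: ulim_uniq; apply: hU; exists N => //.
Qed.

Lemma scaleFp (p : nat) (V : lmodType 'F_p) (c : 'F_p) (v : V) : c *: v = v *+ (c : nat).
Proof. by rewrite -[in LHS](natr_Zp c) scaler_nat. Qed.

Definition subg (V : zmodType) (S : set V) := forall u v, S u -> S v -> S (u - v).

Lemma subg0 (V : zmodType) (S : set V) u : subg S -> S u -> S 0.
Proof. by move=> h Su; rewrite -(subrr u); apply: (h u u). Qed.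

Lemma subgN (V : zmodType) (S : set V) u : subg S -> S 0 -> S u -> S (- u).
Proof. by move=> h S0 Su; rewrite -sub0r; apply: (h 0 u). Qed.

Lemma subgD (V : zmodType) (S : set V) u v : subg S -> S 0 -> S u -> S v -> S (u + v).
Proof. by move=> h S0 Su Sv; rewrite -(opprK v); apply: (h u (- v)) => //; apply: subgN. Qed.

Lemma subgMn (V : zmodType) (S : set V) u n : subg S -> S 0 -> S u -> S (u *+ n).
Proof. by move=> h S0 Su; elim: n => [|n IH]; [rewrite mulr0n|rewrite mulrS; apply: subgD]. Qed.

Lemma subgZ (p : nat) (V : lmodType 'F_p) (S : set V) (c : 'F_p) u :
  subg S -> S 0 -> S u -> S (c *: u).
Proof. by move=> h S0 Su; rewrite scaleFp; apply: subgMn. Qed.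

Definition addf (A : zmodType) (B : zmodType) (f : A -> B) := forall u v, f (u + v) = f u + f v.

Lemma ext_fun (p : nat) (pp : prime p) (V : lmodType 'F_p) (B : set V) (x : V) :
  B 0 -> subg B -> ~ B x ->
  exists h : V -> 'F_p, addf h /\ (forall b, B b -> h b = 0) /\ h x = 1.
Proof.
move=> B0 sB nBx.
pose P (S : set V) := subg S /\ (forall b s, B b -> S s -> x <> b + s).
have [M [[sM xM] Mmax]] : exists A, P A /\ forall C, A `<` C -> ~ P C.
  apply: Zorn_bigcup => F FP Ftot; split.
    move=> u v [X FX Xu] [Y FY Yv].
    case: (Ftot X Y FX FY) => sub.
      by exists Y => //; apply: (proj1 (FP Y FY)) => //; apply: sub.
    by exists X => //; apply: (proj1 (FP X FX)) => //; apply: sub.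
  by move=> b s Bb [X FX Xs]; apply: (proj2 (FP X FX)).
have M0 : M 0.
  case: (pselect (exists m, M m)) => [[m Mm]|nM]; first exact: subg0 Mm.
  exfalso; apply: (Mmax [set 0]).
    split; first by move=> m Mm; case: nM; exists m.
    by move=> /(_ 0 erefl) h; case: nM; exists 0.
  split; first by move=> u v /= -> ->; rewrite subrr.
  by move=> b s Bb /= ->; rewrite addr0 => e; apply: nBx; rewrite e.
pose N (z : V) := exists b m, B b /\ M m /\ z = b + m.
have N0 : N 0 by exists 0, 0; rewrite addr0.
have sN : subg N.
  move=> u v [b [m [Bb [Mm ->]]]] [b' [m' [Bb' [Mm' ->]]]].
  exists (b - b'), (m - m'); split; first exact: sB.
  by split; [exact: sM|rewrite opprD addrACA].
have BN : forall b, B b -> N b by move=> b Bb; exists b, 0; rewrite addr0.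
have nNx : ~ N x by move=> [b [m [Bb [Mm e]]]]; apply: (xM b m).
have key : forall a, ~ N a -> exists z c, N z /\ x = z + c *: a.
  move=> a nNa.
  pose S (z : V) := exists m c, M m /\ z = m + c *: a.
  have : ~ P S.
    apply: Mmax; split.
      by move=> m Mm; exists m, 0; rewrite scale0r addr0.
    move=> SM; apply: nNa; exists 0, a; split => //; split; last by rewrite add0r.
    by apply: SM; exists 0, 1; rewrite scale1r add0r.
  rewrite /P => nPS.
  have sS : subg S.
    move=> u v [m [c [Mm ->]]] [m' [c' [Mm' ->]]].
    exists (m - m'), (c - c'); split; first exact: sM.
    by rewrite scalerBl opprD addrACA.
  have : ~ (forall b s, B b -> S s -> x <> b + s) by move=> h; apply: nPS.
  move=> /existsNP [b] /existsNP [s] /not_implyP [Bb] /not_implyP [[m [c [Mm ->]]]] /contrapT e.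
  exists (b + m), c; split; first by exists b, m.
  by rewrite e addrA.
have Nsc : forall c u, N u -> N (c *: u) by move=> c u Nu; apply: subgZ.
have hex : forall v, exists c, N (v - c *: x).
  move=> v; case: (pselect (N v)) => [Nv|nNv].
    by exists 0; rewrite scale0r subr0.
  have [z [c [Nz e]]] := key v nNv.
  have c0 : c != 0.
    by apply/eqP=> c0; apply: nNx; rewrite e c0 scale0r addr0.
  exists c^-1; rewrite e scalerDr scalerA mulVf // scale1r opprD addrC addrNK.
  by apply: subgN => //; apply: Nsc.
have huniq : forall v c c', N (v - c *: x) -> N (v - c' *: x) -> c = c'.
  move=> v c c' h1 h2; apply/eqP; apply/negPn/negP => ne.
  have : N ((c - c') *: x).
    have -> : (c - c') *: x = (v - c' *: x) - (v - c *: x).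
      by rewrite scalerBl opprB [RHS]addrC [RHS]addrA subrK.
    exact: sN.
  move=> /(Nsc (c - c')^-1); rewrite scalerA mulVf ?subr_eq0 // scale1r.
  exact: nNx.
pose h (v : V) := epsilon (inhabits (0 : 'F_p)) (fun c => N (v - c *: x)).
have hP : forall v, N (v - h v *: x) by move=> v; exact: (epsilon_spec _ _ (hex v)).
exists h; split.
  move=> u v; apply: (huniq (u + v)); first exact: hP.
  rewrite scalerDl opprD addrACA; apply: subgD => //; exact: hP.
split.
  by move=> b Bb; apply: (huniq b) => //; rewrite scale0r subr0; apply: BN.
by apply: (huniq x) => //; rewrite scale1r subrr.
Qed.

Lemma sum_tail (Z : zmodType) (F : nat -> Z) N K :
  (forall m, (N <= m)%N -> F m = 0) -> (N <= K)%N ->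
  \sum_(0 <= m < K) F m = \sum_(0 <= m < N) F m.
Proof.
move=> h NK; rewrite (big_cat_nat (leq0n N) NK) /= [X in _ + X = _]big1_seq ?addr0 // => m.
by rewrite mem_index_iota => /andP[_ /andP[Nm _]]; apply: h.
Qed.

Lemma sum_delta (Z : nzRingType) N j : (j < N)%N ->
  \sum_(0 <= m < N) ((m == j)%:R : Z) = 1.
Proof.
move=> jN; rewrite (big_cat_nat (leq0n j) (ltnW jN)) /= [X in X + _]big1_seq ?add0r; last first.
  by move=> m; rewrite mem_index_iota => /andP[_ mj]; rewrite (ltn_eqF mj).
rewrite big_ltn // eqxx [X in _ + X]big1_seq ?addr0 // => m.
by rewrite mem_index_iota => /andP[_ /andP[jm _]]; rewrite eq_sym (ltn_eqF jm).
Qed.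

Definition faFp (p : nat) (G : Defs.Group) (psi : G -> 'F_p)
  (h : is_hom (gstr G) (addGrpStr 'F_p) psi) : FinApprox G :=
  @FinApprox_ G _ (addGrpStr 'F_p) psi h.

Lemma not_surj (p : nat) (pp : prime p) (G : Defs.Group) (a : nat -> G) (f : nat -> G -> 'F_p)
  (hf : forall m, is_hom (gstr G) (addGrpStr 'F_p) (f m))
  (hb : forall m n, f m (a n) = (m == n)%:R) :
  ~ (forall y : hat G, exists x : G, hatPi x = y).
Proof.
have [U [UF hU]] : exists U : set_system nat, UltraFilter U /\ eventually `<=` U.
  exact: ultraFilterLemma.
pose yf := fun v : FinApprox G => ulim U (fun n => fa_phi v (a n)).
have yc : compatible yf.
  move=> v w g hg hc; rewrite /yf -(ulim_map UF); apply: ulim_ext => k; exact: hc.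
move=> /(_ (exist _ yf yc)) [g hg].
have hev : forall psi (h : is_hom (gstr G) (addGrpStr 'F_p) psi),
    psi g = ulim U (fun n => psi (a n)).
  move=> psi h; exact: (congr1 (fun z => proj1_sig z (faFp h)) hg).
have fg : forall m, f m g = 0.
  move=> m; rewrite (hev _ (hf m)); apply: (ulim_ev UF hU (N := m.+1)) => k mk.
  by rewrite hb; move: mk; rewrite ltn_neqAle => /andP[/negbTE -> _].
pose T := {psi : G -> 'F_p | is_hom (gstr G) (addGrpStr 'F_p) psi}.
pose W := T -> ('F_p)^o.
pose Psi (z : G) : W := fun t => sval t z.
pose tf m : T := exist _ (f m) (hf m).
pose B' : set W := fun b => exists N, (forall m, (N <= m)%N -> b (tf m) = 0) /\
   \sum_(0 <= m < N) b (tf m) = 0.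
have fctB : forall (b b' : W) t, (b - b') t = b t - b' t by [].
have B'0 : B' 0.
  by exists 0%N; split => //; rewrite big_geq.
have sB' : subg B'.
  move=> b b' [N [t1 s1]] [N' [t2 s2]]; exists (maxn N N'); split.
    move=> m; rewrite geq_max => /andP[h1 h2] /=.
    by rewrite (_ : (b - b') (tf m) = b (tf m) - b' (tf m)) // t1 // t2 // subrr.
  rewrite [LHS](_ : _ = \sum_(0 <= m < maxn N N') b (tf m) - \sum_(0 <= m < maxn N N') b' (tf m)).
    by rewrite (sum_tail t1) ?leq_maxl // (sum_tail t2) ?leq_maxr // s1 s2 subrr.
  by rewrite -sumrB.
have nB'a0 : ~ B' (Psi (a 0%N)).
  move=> [N [t1 s1]]; move: s1; rewrite /Psi /=.
  case: N t1 => [|N] t1.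
    by move: (t1 0%N (leq0n _)); rewrite /= hb eqxx => /eqP; rewrite oner_eq0.
  rewrite big_nat_recl //= hb eqxx big1_seq ?addr0 => [/eqP|m _]; first by rewrite oner_eq0.
  by rewrite hb.
have B'g : B' (Psi g).
  by exists 0%N; split; [move=> m _; exact: fg|rewrite big_geq].
have B'an : forall n, B' (Psi (a n) - Psi (a 0%N)).
  move=> n; exists n.+1; split.
    move=> m nm; rewrite fctB /Psi /= !hb.
    have -> : (m == n) = false by apply: gtn_eqF.
    have -> : (m == 0%N) = false by apply: gtn_eqF; apply: leq_ltn_trans nm.
    by rewrite subrr.
  under eq_bigr => m _ do rewrite fctB /Psi /= !hb.
  by rewrite sumrB !sum_delta // subrr.
have [h [hadd [hB' h1]]] := ext_fun pp B'0 sB' nB'a0.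
pose psi (z : G) := h (Psi z).
have hpsi : is_hom (gstr G) (addGrpStr 'F_p) psi.
  move=> z z'; rewrite /psi /=.
  have -> : Psi (gmul (gstr G) z z') = Psi z + Psi z'.
    by apply: funext => t; rewrite /Psi; case: t => /= q hq; rewrite hq.
  exact: hadd.
have := hev psi hpsi.
have -> : psi g = 0 by apply: hB'.
rewrite (ulim_ev UF hU (c := 1) (N := 0%N)).
  by move/eqP; rewrite eq_sym oner_eq0.
move=> k _; rewrite /psi.
have -> : Psi (a k) = (Psi (a k) - Psi (a 0%N)) + Psi (a 0%N) by rewrite subrK.
by rewrite hadd hB' // add0r.
Qed.

Definition good (p : nat) (G : Defs.Group) := exists (a : nat -> G) (f : nat -> G -> 'F_p),
  (forall m, is_hom (gstr G) (addGrpStr 'F_p) (f m)) /\ (forall m n, f m (a n) = (m == n)%:R).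

Lemma good_hat p (G : Defs.Group) : good p G -> good p (hat G).
Proof.
move=> [a [f [hf hb]]].
exists (fun n => hatPi (a n)), (fun m (x : hat G) => proj1_sig x (faFp (hf m))).
by split => // m x y.
Qed.

Lemma hat_inj (G : Defs.Group) : injective (@hatPi (hat G)).
Proof.
move=> x y e; apply: hat_eq => v.
pose w := @FinApprox_ (hat G) _ (fa_str v) (fun z : hat G => proj1_sig z v) (fun _ _ => erefl).
exact: (congr1 (fun z => proj1_sig z w) e).
Qed.

Lemma af0 (A B : zmodType) (f : A -> B) : addf f -> f 0 = 0.
Proof. by move=> hf; apply: (@addIr _ (f 0)); rewrite -hf !add0r. Qed.

Lemma afN (A B : zmodType) (f : A -> B) u : addf f -> f (- u) = - f u.
Proof. by move=> hf; apply: (@addIr _ (f u)); rewrite -hf !addNr af0. Qed.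

Lemma afB (A B : zmodType) (f : A -> B) u v : addf f -> f (u - v) = f u - f v.
Proof. by move=> hf; rewrite hf afN. Qed.

Lemma afMn (A B : zmodType) (f : A -> B) u k : addf f -> f (u *+ k) = f u *+ k.
Proof. by move=> hf; elim: k => [|k IH]; rewrite ?mulr0n ?af0 // !mulrS hf IH. Qed.

Lemma afZ (p : nat) (V : lmodType 'F_p) (f : V -> 'F_p) c u : addf f -> f (c *: u) = c * f u.
Proof.
by move=> hf; rewrite scaleFp afMn // -mulr_natr natr_Zp mulrC.
Qed.

Lemma afS (A B : zmodType) (f : A -> B) n (F : 'I_n -> A) : addf f ->
  f (\sum_(i < n) F i) = \sum_(i < n) f (F i).
Proof. by move=> hf; apply: (big_morph f hf (af0 hf)). Qed.

Lemma sum_ord1 (Z : zmodType) n (F : 'I_n -> Z) (j : 'I_n) :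
  (forall k, k != j -> F k = 0) -> \sum_(k < n) F k = F j.
Proof. by move=> h; rewrite (bigD1 j) //= big1 ?addr0. Qed.

Definition bio (p : nat) (V : lmodType 'F_p) (s : seq (V * (V -> 'F_p))) :=
  (forall i, (i < size s)%N -> addf (nth (0, fun _ => 0) s i).2) /\
  (forall i j, (i < size s)%N -> (j < size s)%N ->
     (nth (0, fun _ => 0) s i).2 (nth (0, fun _ => 0) s j).1 = (i == j)%:R).

Lemma bio_step (p : nat) (pp : prime p) (V : lmodType 'F_p) (hV : infinite_dim V)
  (s : seq (V * (V -> 'F_p))) : bio s -> exists q, bio (rcons s q).
Proof.
move=> [hadd hb].
set d := (0, fun _ => 0) : V * (V -> 'F_p).
set n := size s.
pose e (i : 'I_n) := (nth d s i).1.
pose fs (i : nat) := (nth d s i).2.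
have [z hz] : exists z, forall c : 'I_n -> 'F_p, z <> \sum_(i < n) c i *: e i.
  apply: contrapT => H; apply: hV; exists n, e => x; apply: contrapT => H2.
  apply: H; exists x => c hc; apply: H2; exists c; exact: hc.
pose az := z - \sum_(i < n) fs i z *: e i.
pose B : set V := fun v => exists c : 'I_n -> 'F_p, v = \sum_(i < n) c i *: e i.
have B0 : B 0.
  by exists (fun _ => 0); rewrite big1 // => i _; rewrite scale0r.
have sB : subg B.
  move=> u v [c ->] [c' ->]; exists (fun i => c i - c' i).
  by rewrite -sumrB; apply: eq_bigr => i _; rewrite scalerBl.
have nBaz : ~ B az.
  move=> [c hc]; apply: (hz (fun i => c i + fs i z)).
  rewrite {1}(_ : z = az + \sum_(i < n) fs i z *: e i); last by rewrite subrK.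
  by rewrite hc -big_split; apply: eq_bigr => i _; rewrite scalerDl.
have [h [hh [hB h1]]] := ext_fun pp B0 sB nBaz.
exists (az, h); split.
  move=> i; rewrite size_rcons ltnS leq_eqVlt => /orP[/eqP ->|lti].
    by rewrite nth_rcons ltnn eqxx.
  by rewrite nth_rcons lti; apply: hadd.
move=> i j; rewrite !size_rcons !ltnS => hi hj.
move: hi hj; rewrite [(i <= _)%N]leq_eqVlt [(j <= _)%N]leq_eqVlt => /orP[/eqP ->|lti] /orP[/eqP ->|ltj];
  rewrite !nth_rcons ?ltnn ?eqxx ?lti ?ltj.
- by [].
- rewrite eq_sym (ltn_eqF ltj); apply: hB.
  exists (fun k => (k == Ordinal ltj)%:R).
  rewrite (sum_ord1 (j := Ordinal ltj)) ?eqxx ?scale1r //.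
  by move=> k /negbTE ->; rewrite scale0r.
- rewrite (ltn_eqF lti).
  have ha := hadd i lti.
  rewrite /az afB // afS //.
  rewrite (sum_ord1 (j := Ordinal lti)) /=.
    by rewrite afZ // hb // eqxx mulr1 subrr.
  move=> k kne; rewrite afZ // hb //.
  suff -> : (i == k) = false by rewrite mulr0.
  by apply/eqP => ik; move/eqP: kne; apply; apply: val_inj.
- exact: hb.
Qed.

Fixpoint hist (p : nat) (V : lmodType 'F_p) (n : nat) : seq (V * (V -> 'F_p)) :=
  match n with
  | 0 => [::]
  | n'.+1 => let s := hist V n' in
     rcons s (epsilon (inhabits ((0, fun _ => 0) : V * (V -> 'F_p))) (fun q => bio (rcons s q)))
  end.

Lemma size_hist p (V : lmodType 'F_p) n : size (hist V n) = n.
Proof. by elim: n => //= n IH; rewrite size_rcons IH. Qed.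

Lemma bio_hist (p : nat) (pp : prime p) (V : lmodType 'F_p) (hV : infinite_dim V) n :
  bio (hist V n).
Proof.
elim: n => [|n IH] /=; first by split.
exact: (epsilon_spec _ _ (bio_step pp hV IH)).
Qed.

Lemma nth_hist p (V : lmodType 'F_p) n N : (n < N)%N ->
  nth (0, fun _ => 0) (hist V N) n = nth (0, fun _ => 0) (hist V n.+1) n.
Proof.
elim: N => // N IH; rewrite ltnS leq_eqVlt => /orP[/eqP -> //|lt].
by rewrite /= nth_rcons size_hist lt -IH.
Qed.

Lemma good_V (p : nat) (pp : prime p) (V : lmodType 'F_p) (hV : infinite_dim V) :
  good p (addGroup V).
Proof.
pose d := ((0, fun _ => 0) : V * (V -> 'F_p)).
exists (fun n => (nth d (hist V n.+1) n).1), (fun m => (nth d (hist V m.+1) m).2).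
have [ha hb] := bio_hist pp hV (maxn 0 0).
split.
  move=> m; have [ha' _] := bio_hist pp hV m.+1.
  by apply: ha'; rewrite size_hist.
move=> m n; have [_ hb'] := bio_hist pp hV (maxn m n).+1.
rewrite -(@nth_hist _ _ m (maxn m n).+1) ?ltnS ?leq_maxl //.
rewrite -(@nth_hist _ _ n (maxn m n).+1) ?ltnS ?leq_maxr //.
by apply: hb'; rewrite size_hist ltnS ?leq_maxl ?leq_maxr.
Qed.

Lemma V_inj (p : nat) (pp : prime p) (V : lmodType 'F_p) : injective (@hatPi (addGroup V)).
Proof.
move=> x y e; apply: contrapT => ne.
have B0 : [set 0 : V] 0 by [].
have sB : subg [set 0 : V] by move=> u v /= -> ->; rewrite subrr.
have nB : ~ [set 0 : V] (x - y) by move=> /= /eqP; rewrite subr_eq0 => /eqP.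
have [h [hh [hB h1]]] := ext_fun pp B0 sB nB.
have := congr1 (fun z => proj1_sig z (faFp (hh : is_hom (gstr (addGroup V)) (addGrpStr 'F_p) h))) e.
move=> /= hxy; move: h1; rewrite afB // hxy subrr => /eqP; rewrite eq_sym oner_eq0.
by [].
Qed.

Lemma good_iter (p : nat) (pp : prime p) (V : lmodType 'F_p) (hV : infinite_dim V) j :
  good p (hatIter (addGroup V) j).
Proof. elim: j => [|j IH] /=; [exact: good_V | exact: good_hat]. Qed.

Unset Implicit Arguments.
Local Close Scope classical_set_scope.
Local Close Scope ring_scope.

Theorem mainTheorem5 (p : nat) (p_prime : prime p) (V : lmodType 'F_p)
  (hV : infinite_dim V) :
  forall i : nat, (1 <= i)%N ->
    let G := hatIter (addGroup V) i.-1 in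
    is_hom (gstr G) (gstr (hat G)) (@hatPi G) /\
    injective (@hatPi G) /\
    ~ (forall y : hat G, exists x : G, hatPi x = y).
Proof.
case=> // j _ G; split; first by move=> x y; apply: hat_eq => v /=; apply: fa_hom.
split; last first.
  have [a [f [hf hb]]] := good_iter p_prime hV j.
  exact: (not_surj p_prime hf hb).
rewrite /G /=; case: j {G} => [|j] /=; first exact: V_inj.
exact: hat_inj.
Qed.
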